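(* Let $G$ be a group, let $\tau,\rho\in\mathrm{Aut}(G)$ and $\sigma\in\mathrm{End}(G)$ be such that $\rho\circ\tau=\tau\circ\rho$, $\rho\circ\sigma=\sigma\circ\rho$, and for all $y,z\in G$ \[\tau(\sigma(y))\,\sigma(z)=\tau(\sigma(\rho(z)))\,\sigma(\tau(y))\,\sigma(\sigma(z)).\] Define $B:G\times G\to G\times G$ by $B(x,y)=(\tau(y)\sigma(x),\,\rho(x))$. Then $(G,B)$ is a birack, with kink map given by $\pi(x)=\tau(\rho(x))\,\sigma(x)$.
   Context: Let $X$ be a set. A map $B:X\times X\to X\times X$, written $B=(B_1,B_2)$, is strongly invertible if: (i) $B$ is a bijection; (ii) there is a unique invertible map $S:X\times X\to X\times X$ (the sideways map) with $S(B_1(x,y),x)=(B_2(x,y),y)$ for all $x,y$; (iii) writing $S=(S_1,S_2)$, $S^{-1}=(S^{-1}_1,S^{-1}_2)$ and $\Delta(x)=(x,x)$, each of $S_1\circ\Delta$, $S_2\circ\Delta$, $S^{-1}_1\circ\Delta$, $S^{-1}_2\circ\Delta$ is a bijection $X\to X$. A birack is a pair $(X,B)$ with $B$ strongly invertible satisfying the set-theoretic Yang–Baxter equation $(B\times\mathrm{Id})(\mathrm{Id}\times B)(B\times\mathrm{Id})=(\mathrm{Id}\times B)(B\times\mathrm{Id})(\mathrm{Id}\times B)$. Its kink map is $\pi=S^{-1}_1\circ\Delta\circ(S^{-1}_2\circ\Delta)^{-1}$. Group multiplication in $G$ is written by juxtaposition. *)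

(* Defs.v *)
From HB Require Import structures.
From mathcomp Require Import all_boot.
Set Implicit Arguments. Unset Strict Implicit. Unset Printing Implicit Defensive.

Section Birack.
Variable X : Type.

Definition sideways (B S : X * X -> X * X) : Prop :=
  forall x y, S ((B (x, y)).1, x) = ((B (x, y)).2, y).

Definition strongly_invertible (B : X * X -> X * X) : Prop :=
  bijective B /\
  exists S Sinv : X * X -> X * X,
    [/\ cancel S Sinv, cancel Sinv S, sideways B S,
        (forall S', bijective S' -> sideways B S' -> S' =1 S) &
        [/\ bijective (fun x => (S (x, x)).1),
            bijective (fun x => (S (x, x)).2),
            bijective (fun x => (Sinv (x, x)).1) &
            bijective (fun x => (Sinv (x, x)).2)]].

Definition BxId (B : X * X -> X * X) (t : X * X * X) : X * X * X :=
  let: (x, y, z) := t in let: (a, b) := B (x, y) in (a, b, z).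
Definition IdxB (B : X * X -> X * X) (t : X * X * X) : X * X * X :=
  let: (x, y, z) := t in let: (a, b) := B (y, z) in (x, a, b).

Definition yang_baxter (B : X * X -> X * X) : Prop :=
  forall t, BxId B (IdxB B (BxId B t)) = IdxB B (BxId B (IdxB B t)).

Definition birack (B : X * X -> X * X) : Prop :=
  strongly_invertible B /\ yang_baxter B.

(* pi is the kink map pi = Sinv_1 o Delta o (Sinv_2 o Delta)^{-1}, where S is
   the (unique) invertible sideways map of B, Sinv its inverse, and g the
   inverse of Sinv_2 o Delta. *)
Definition is_kink_map (B : X * X -> X * X) (pi : X -> X) : Prop :=
  forall S Sinv : X * X -> X * X,
    cancel S Sinv -> cancel Sinv S -> sideways B S ->
  forall g : X -> X,
    cancel (fun x => (Sinv (x, x)).2) g -> cancel g (fun x => (Sinv (x, x)).2) ->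
  forall x, pi x = (Sinv (g x, g x)).1.

End Birack.

(* Main.v *)
Require Import Defs.
From HB Require Import structures.
From mathcomp Require Import all_boot.
Local Open Scope group_scope.

Lemma morph1_g {G : groupType} {f : G -> G} :
  {morph f : x y / x * y} -> f 1 = 1.
Proof.
move=> fM; apply: (@mulgI _ (f 1)); by rewrite -fM !mulg1.
Qed.

Lemma morphV_g {G : groupType} {f : G -> G} :
  {morph f : x y / x * y} -> forall x, f x^-1 = (f x)^-1.
Proof.
move=> fM x; symmetry; apply: mulg1_eq; by rewrite -fM mulgV morph1_g.
Qed.

Theorem mainTheorem6 (G : groupType) (tau rho sigma : G -> G)
  (tau_morph : {morph tau : x y / x * y})
  (rho_morph : {morph rho : x y / x * y})
  (sigma_morph : {morph sigma : x y / x * y})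
  (tau_bij : bijective tau) (rho_bij : bijective rho)
  (rho_tau : forall x, rho (tau x) = tau (rho x))
  (rho_sigma : forall x, rho (sigma x) = sigma (rho x))
  (H : forall y z : G,
      tau (sigma y) * sigma z
      = tau (sigma (rho z)) * sigma (tau y) * sigma (sigma z)) :
  let B := fun p : G * G => (tau p.2 * sigma p.1, rho p.1) in
  birack B /\ is_kink_map B (fun x => tau (rho x) * sigma x).
Proof.
move=> B.
case: tau_bij => ti tK tiK; case: rho_bij => ri rK riK.
have s1 := morph1_g sigma_morph.
have sV := morphV_g sigma_morph.
have tV := morphV_g tau_morph.
have rV := morphV_g rho_morph.
have t1 := morph1_g tau_morph.
have r1 := morph1_g rho_morph.
have ts : forall y, tau (sigma y) = sigma (tau y).
  move=> y; have := H y 1; by rewrite r1 !s1 t1 !mulg1 mul1g.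
have F2 : forall z, sigma z = tau (rho (sigma z)) * sigma (sigma z).
  move=> z; have := H 1 z; rewrite !s1 t1 s1 mul1g mulg1 => e.
  by rewrite rho_sigma; exact: e.
have kinj : forall a b, tau (rho a) = tau (rho b) -> a = b.
  by move=> a b /(can_inj tK) /(can_inj rK).
have ks : forall x, tau (rho (sigma x)) = sigma (tau (rho x)).
  by move=> x; rewrite rho_sigma ts.
have L1 : forall x, sigma (x * (sigma x)^-1) = tau (rho (sigma x)).
  move=> x; rewrite sigma_morph sV {1}(F2 x) mulgK //.
pose f := fun x : G => x * (sigma x)^-1.
pose g := fun v : G => v * ri (ti (sigma v)).
have fg : cancel g f.
  move=> u; rewrite /f /g.
  suff -> : sigma (u * ri (ti (sigma u))) = ri (ti (sigma u)) by rewrite mulgK.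
  apply: kinj; rewrite ks rho_morph tau_morph riK tiK sigma_morph -ks.
  by rewrite -(F2 u).
have gf : cancel f g.
  move=> x; rewrite /f /g L1 tK rK.
  by rewrite mulgVK.
pose S := fun p : G * G => (rho p.2, ti (p.1 * (sigma p.2)^-1)).
pose Si := fun p : G * G => (tau p.2 * sigma (ri p.1), ri p.1).
have Suniq : forall S', sideways B S' -> S' =1 S.
  move=> S' sw [a x].
  have -> : a = tau (ti (a * (sigma x)^-1)) * sigma x by rewrite tiK mulgVK.
  by rewrite sw /S /B /= mulgK tiK.
have h_bij : bijective (fun x => tau (rho x) * sigma x).
  exists (fun u => ri (ti (f u))).
  - move=> z; rewrite /f sigma_morph -ks -(F2 z) mulgK.
    by rewrite tK rK.
  - move=> u; rewrite /f.
    have e : sigma (ri (ti (f u))) = sigma u.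
      apply: kinj; rewrite ks riK tiK /f L1 //.
    rewrite e riK tiK /f mulgVK //.
split; last first.
  move=> S' Si' c1 c2 sw g' gc1 gc2 x.
  have eS := Suniq S' sw.
  have eSi : forall u y, Si' (u, y) = (tau y * sigma (ri u), ri u).
    move=> u y; have := c2 (u, y); rewrite eS /S.
    case: (Si' (u, y)) => a b /= [e1 e2].
    have eb : b = ri u by rewrite -e1 rK.
    by rewrite eb -e2 tiK -eb mulgVK.
  have eg : g' x = rho x.
    have := gc2 x; rewrite eSi /= => e; by rewrite -[in RHS]e riK.
  by rewrite eg eSi /= rK.
split.
  split.
    exists (fun p : G * G => (ri p.2, ti (p.1 * (sigma (ri p.2))^-1))).
    - by move=> [x y]; rewrite /B /= rK mulgK tK.
    - by move=> [a b]; rewrite /B /= tiK mulgVK riK.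
  exists S, Si; split.
  - by move=> [a x]; rewrite /S /Si /= rK tiK mulgVK.
  - by move=> [u y]; rewrite /S /Si /= riK mulgK tK.
  - by move=> x y; rewrite /S /B /= mulgK tK.
  - by move=> S' _ sw; apply: Suniq.
  split.
  - by exists ri => x /=; [rewrite rK | rewrite riK].
  - exists (fun u => g (tau u)) => x /=.
      by rewrite tiK gf.
    by have := fg (tau x); rewrite /f => ->; rewrite tK.
  - exists (fun u => rho (ri (ti (f u)))) => x /=.
      rewrite riK /f.
      have cl : forall z, ti (tau (rho z) * sigma z / sigma (tau (rho z) * sigma z)) = rho z.
        move=> z; rewrite sigma_morph -ks -(F2 z) mulgK tK //.
      by have := cl (ri x); rewrite riK.
    rewrite /f.
    have e : sigma (ri (ti (x * (sigma x)^-1))) = sigma x.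
      apply: kinj; rewrite ks riK tiK L1 //.
    by rewrite rK e riK tiK mulgVK.
  - by exists rho => x /=; [rewrite riK | rewrite rK].
move=> [[x y] z]; rewrite /BxId /IdxB /B /=.
congr (_, _, _).
- rewrite !tau_morph !sigma_morph -!mulgA; congr (_ * _).
  by rewrite !mulgA -H.
- by rewrite rho_morph rho_tau rho_sigma.
Qed.
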